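(* Let $A\in\mathbb{R}^{n\times n}$ and $B_u\in\mathbb{R}^{n\times l}$ be given, and let data samples $d_i=\begin{bmatrix}\hat x_i^\top & u_i^\top & \hat\eta_i^\top\end{bmatrix}^\top$, $i=1,\dots,N$, with $\hat x_i\in\mathbb{R}^n$, $u_i\in\mathbb{R}^l$, $\hat\eta_i\in\mathbb{R}^n$, be given. Let $D=\sum_{i=1}^N d_id_i^\top$ and let $\tilde D$ be a matrix with $D=\tilde D^\top\tilde D$ (e.g. a Cholesky factor). Consider the semidefinite program in the variables $P=P^\top\in\mathbb{R}^{n\times n}$, $S\in\mathbb{R}^{n\times n}$, $R\in\mathbb{R}^{n\times l}$, $W=W^\top\in\mathbb{R}^{n\times n}$: $$\min_{P,S,R,W}\ \operatorname{tr}(W)\quad\text{s.t.}\quad A^\top P+PA+S^\top+S\prec 0,\qquad \begin{bmatrix}2P & \tilde T\tilde D^\top & I\\ \star & I & 0\\ \star & \star & W\end{bmatrix}\succeq 0,\qquad P\succ 0,$$ where $\tilde T:=\begin{bmatrix} S & R & -P\end{bmatrix}$ and $\star$ denotes the blocks determined by symmetry. Let $(P^\star,S^\star,R^\star,W^\star)$ be an optimizer of this program. Set $S_{\eta_l}=I_n$, $\Theta_l=\Theta_l^\star:=(P^\star)^{-1}S^\star$ and $B_l=B_l^\star:=(P^\star)^{-1}R^\star$. Then the model $$\dot x=Ax+B_uu+S_{\eta_l}(\Theta_l x+B_l u)$$ is asymptotically stable (for $u=0$), i.e. $A+S_{\eta_l}\Theta_l^\star$ is Hurwitz, with $V(x)=x^\top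 P^\star x$ a Lyapunov function satisfying $(A+\Theta_l^\star)^\top P^\star+P^\star(A+\Theta_l^\star)\prec 0$. Moreover, the cost $$J=\sum_{i=1}^N e_i^\top e_i,\qquad e_i:=\Theta_l^\star\hat x_i+B_l^\star u_i-\hat\eta_i,$$ satisfies $J\le \operatorname{tr}(W^\star)$.
   Context: Setting: one seeks a linear uncertainty model $\eta_l(x,u)=\Theta_lx+B_lu$ to augment the known linear model $\dot x=Ax+B_uu$ as $\dot x=Ax+B_uu+S_{\eta_l}\eta_l(x,u)$, fitted to data $(\hat x_i,u_i,\hat\eta_i)$ (estimates of state, input, and uncertainty) by the quadratic cost $J=\sum_i e_i^\top e_i=\sum_i d_i^\top T^\top T d_i$ with $T=[\Theta_l\ \ B_l\ \ -I]$ and $e_i=Td_i$. Note $J=\operatorname{tr}(TDT^\top)$. A matrix is Hurwitz if all its eigenvalues have negative real part. *)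

(* Defs.v *)
From HB Require Import structures.
From mathcomp Require Import all_boot all_order all_algebra.
From mathcomp Require Export complex.
Set Implicit Arguments. Unset Strict Implicit. Unset Printing Implicit Defensive.
Import Order.TTheory GRing.Theory Num.Theory.
Local Open Scope ring_scope.

Section Defs.
Variable R : rcfType.

Definition posdef (n : nat) (M : 'M[R]_n) : Prop :=
  M^T = M /\ forall v : 'cV[R]_n, v != 0 -> 0 < (v^T *m M *m v) 0 0.

Definition possemidef (n : nat) (M : 'M[R]_n) : Prop :=
  M^T = M /\ forall v : 'cV[R]_n, 0 <= (v^T *m M *m v) 0 0.

Definition negdef (n : nat) (M : 'M[R]_n) : Prop := posdef (- M).

Definition cmx (m n : nat) (M : 'M[R]_(m, n)) : 'M[R[i]]_(m, n) :=
  map_mx (fun x => x%:C%C) M.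

Definition hurwitz (n : nat) (M : 'M[R]_n) : Prop :=
  forall z : R[i], eigenvalue (cmx M) z -> Re z < 0.

Definition datavec (n l : nat) (x : 'cV[R]_n) (u : 'cV[R]_l) (eta : 'cV[R]_n)
  : 'cV[R]_(n + l + n) := col_mx (col_mx x u) eta.

Definition dataD (n l N : nat) (xh : 'I_N -> 'cV[R]_n) (u : 'I_N -> 'cV[R]_l)
  (etah : 'I_N -> 'cV[R]_n) : 'M[R]_(n + l + n) :=
  \sum_(i < N) (datavec (xh i) (u i) (etah i) *m (datavec (xh i) (u i) (etah i))^T).

Definition Ttilde (n l : nat) (P S : 'M[R]_n) (Rm : 'M[R]_(n, l)) : 'M[R]_(n, n + l + n) :=
  row_mx (row_mx S Rm) (- P).

(* The LMI block matrix
   [ 2P        Tt Dt^T   I ]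
   [ Dt Tt^T   I         0 ]
   [ I         0         W ]  *)
Definition lmi_block (n l k : nat) (Dt : 'M[R]_(k, n + l + n))
  (P S : 'M[R]_n) (Rm : 'M[R]_(n, l)) (W : 'M[R]_n) : 'M[R]_(n + k + n) :=
  block_mx
    (block_mx (P *+ 2) (Ttilde P S Rm *m Dt^T) (Dt *m (Ttilde P S Rm)^T) 1%:M)
    (col_mx (1%:M : 'M[R]_n) (0 : 'M[R]_(k, n)))
    (row_mx (1%:M : 'M[R]_n) (0 : 'M[R]_(n, k)))
    W.

Definition sdp_feasible (n l k : nat) (A : 'M[R]_n) (Dt : 'M[R]_(k, n + l + n))
  (P S : 'M[R]_n) (Rm : 'M[R]_(n, l)) (W : 'M[R]_n) : Prop :=
  [/\ P^T = P, W^T = W,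
      negdef (A^T *m P + P *m A + S^T + S),
      possemidef (lmi_block Dt P S Rm W)
    & posdef P].

Definition sdp_optimal (n l k : nat) (A : 'M[R]_n) (Dt : 'M[R]_(k, n + l + n))
  (P S : 'M[R]_n) (Rm : 'M[R]_(n, l)) (W : 'M[R]_n) : Prop :=
  sdp_feasible A Dt P S Rm W /\
  forall P' S' (Rm' : 'M[R]_(n, l)) W',
    sdp_feasible A Dt P' S' Rm' W' -> \tr W <= \tr W'.

Definition costJ (n l N : nat) (Theta : 'M[R]_n) (B : 'M[R]_(n, l))
  (xh : 'I_N -> 'cV[R]_n) (u : 'I_N -> 'cV[R]_l) (etah : 'I_N -> 'cV[R]_n) : R :=
  \sum_(i < N) let e := Theta *m xh i + B *m u i - etah i in (e^T *m e) 0 0.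

End Defs.

(* Main.v *)
Require Import Defs.
From HB Require Import structures.
From mathcomp Require Import all_boot all_order all_algebra.
From mathcomp Require Import complex.
From mathcomp Require Import ring lra.
Import Order.TTheory GRing.Theory Num.Theory.
Local Open Scope ring_scope.


Section C0.
Variable R : rcfType.
Local Notation CRe := (@complex.Re R).
Local Notation CIm := (@complex.Im R).

Lemma ReD (x y : R[i]) : CRe (x + y) = CRe x + CRe y.
Proof. by case: x => a b; case: y => c d. Qed.

Lemma Re_sum (I : finType) (F : I -> R[i]) : CRe (\sum_i F i) = \sum_i CRe (F i).
Proof. by rewrite (big_morph CRe ReD (erefl (CRe 0))). Qed.

Lemma Re_term (x y : R[i]) (q : R) :
  CRe ((x^*)%C * (q%:C)%C * y) = CRe x * q * CRe y + CIm x * q * CIm y.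
Proof. case: x => a b; case: y => c d; simpc => /=. ring. Qed.

Lemma Re_2 (z s : R[i]) : CRe ((z^*)%C * s + z * s) = 2 * CRe z * CRe s.
Proof. case: z => a b; case: s => c d; simpc => /=. ring. Qed.

Lemma Re_lt0 (z : R[i]) : CRe z < 0 -> 'Re z < 0.
Proof. by move=> h; rewrite -complexRe ltcR. Qed.
End C0.

Section C1.
Variable R : rcfType.
Local Notation CRe := (@complex.Re R).
Local Notation CIm := (@complex.Im R).
Lemma cquad n (Q : 'M[R]_n) (v : 'rV[R[i]]_n) :
 CRe ((map_mx conjc v *m cmx Q *m v^T) 0 0) =
 (map_mx CRe v *m Q *m (map_mx CRe v)^T) 0 0 + (map_mx CIm v *m Q *m (map_mx CIm v)^T) 0 0.
Proof.
rewrite !mxE Re_sum -big_split /=; apply: eq_bigr => j _.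
rewrite !mxE !big_distrl Re_sum -big_split /=; apply: eq_bigr => i _.
rewrite !mxE Re_term. done.
Qed.
End C1.


Lemma eig_tr (F : fieldType) n (M : 'M[F]_n) a : eigenvalue M^T a = eigenvalue M a.
Proof.
rewrite !eigenvalue_root_char /char_poly -det_tr; congr (root (\det _) a).
by apply/matrixP => i j; rewrite !mxE eq_sym.
Qed.

Section C2.
Variable R : rcfType.
Local Notation CRe := (@complex.Re R).
Local Notation CIm := (@complex.Im R).

Lemma pd_row n (P : 'M[R]_n) (a : 'rV[R]_n) : posdef P ->
  0 <= (a *m P *m a^T) 0 0 /\ (a != 0 -> 0 < (a *m P *m a^T) 0 0).
Proof.
move=> [_ hP]; have e : a = (a^T)^T by rewrite trmxK.
case: (eqVneq a 0) => [->|anz].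
  by rewrite !mul0mx mxE; split => //; rewrite eqxx.
have h : 0 < (a *m P *m a^T) 0 0.
  rewrite [in X in X *m P]e; apply: hP.
  by apply: contra anz => /eqP h; rewrite e h trmx0.
by split => //; apply: ltW.
Qed.
Arguments pd_row {n P}.

Lemma lyap_hurwitz n (M P : 'M[R]_n) :
  posdef P -> negdef (M^T *m P + P *m M) -> hurwitz M.
Proof.
move=> hP hQ z; rewrite -eig_tr => /eigenvalueP [v hv vnz].
pose vb := map_mx conjc v.
have hvb : vb *m (cmx M)^T = (z^*)%C *: vb.
  have e1 : vb *m (cmx M)^T = map_mx conjc (v *m (cmx M)^T).
    apply/matrixP => i j; rewrite !mxE rmorph_sum; apply: eq_bigr => k _.
    by rewrite !mxE rmorphM /= oppr0.
  rewrite e1 hv; apply/matrixP => i j; rewrite !mxE rmorphM.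
  done.
have hMv : cmx M *m v^T = z *: v^T.
  by rewrite -[cmx M]trmxK -trmx_mul hv linearZ.
pose s := (vb *m cmx P *m v^T) 0 0.
have hq : (vb *m cmx (M^T *m P + P *m M) *m v^T) 0 0 = (z^*)%C * s + z * s.
  rewrite /cmx map_mxD !map_mxM -map_trmx -/(cmx M) -/(cmx P).
  rewrite mulmxDr mulmxDl !mulmxA hvb -!scalemxAl -[_ *m cmx M *m _]mulmxA hMv.
  by rewrite -scalemxAr !mxE /s !mxE.
have [neg _] := hQ.
pose a := map_mx CRe v; pose b := map_mx CIm v.
have ab : a != 0 \/ b != 0.
  case: (eqVneq a 0) => ha; last by left.
  case: (eqVneq b 0) => hb; last by right.
  exfalso; move/negP: vnz; apply; apply/eqP/matrixP => i j.
  have := congr1 (fun m : 'M[R]_(1,n) => m i j) ha; have := congr1 (fun m : 'M[R]_(1,n) => m i j) hb.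
  rewrite !mxE; case: (v i j) => x y /= -> ->. done.
have hs : 0 < CRe s.
  rewrite /s cquad; have [h1 h2] := pd_row a hP; have [h3 h4] := pd_row b hP.
  by case: ab => [/h2|/h4] h; [apply: ltr_wpDr | apply: ltr_wpDl].
have hqn : CRe ((vb *m cmx (M^T *m P + P *m M) *m v^T) 0 0) < 0.
  rewrite cquad; have [h1 h2] := pd_row a hQ; have [h3 h4] := pd_row b hQ.
  have e : forall c : 'rV[R]_n, (c *m - (M^T *m P + P *m M) *m c^T) 0 0 =
     - (c *m (M^T *m P + P *m M) *m c^T) 0 0.
    by move=> c; rewrite mulmxN mulNmx mxE.
  rewrite e in h1 h2; rewrite e in h3 h4.
  rewrite -oppr_gt0 opprD.
  by case: ab => [/h2|/h4] h; [apply: ltr_wpDr | apply: ltr_wpDl].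
rewrite hq Re_2 in hqn.
apply: Re_lt0. nra.
Qed.
End C2.


Section C3.
Variable R : rcfType.

Lemma pd_unit n (P : 'M[R]_n) : posdef P -> P \in unitmx.
Proof.
move=> hP; rewrite unitmxE unitfE; apply/negP => /det0P [v vnz hv].
have [_ h] := @pd_row R n P v hP.
by move: (h vnz); rewrite hv mul0mx mxE ltxx.
Qed.

Lemma zm (V : zmodType) (p a w : V) : -(-(p+p) + a + p) + (-p + w) = w - a.
Proof.
by rewrite !opprD !opprK addrC !addrA (addrC (-p) w) addrNK (addrAC w p (-a)) addrK.
Qed.

Lemma claimZ n k (Dt : 'M[R]_(k, n)) (P Pi W : 'M[R]_n) (X : 'M[R]_(n, k)) :
  Pi *m P = 1%:M -> Pi^T = Pi ->
  (col_mx (col_mx (- Pi) (X^T *m Pi)) (1%:M : 'M_n))^T *m block_mx (block_mx (P *+ 2) X X^T 1%:M)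
    (col_mx (1%:M : 'M[R]_n) (0 : 'M[R]_(k, n)))
    (row_mx (1%:M : 'M[R]_n) (0 : 'M[R]_(n, k))) W *m
    (col_mx (col_mx (- Pi) (X^T *m Pi)) (1%:M : 'M_n))
  = W - Pi *m X *m X^T *m Pi.
Proof.
move=> hPi hT; rewrite !tr_col_mx trmx1 trmx_mul trmxK hT linearN /= hT.
rewrite mul_row_block mul_row_block mul_row_col.
rewrite !mul1mx !mulmx1 add_row_mx !mul_row_col.
rewrite mulmx0 addr0 mulmx1 !mulNmx addNr.
rewrite mul0mx !addr0 mulr2n mulmxDr hPi mulmxN !mulmxDl !mulNmx !mul1mx.
rewrite mulmxDl !mul1mx.
by rewrite !opprD !opprK addrC !addrA (addrC (-Pi) W) addrNK (addrAC W Pi) addrK.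
Qed.


Lemma psd_tr m p (L : 'M[R]_m) (Z : 'M[R]_(m, p)) :
  possemidef L -> 0 <= \tr (Z^T *m L *m Z).
Proof.
move=> [_ hL]; rewrite /mxtrace; apply: sumr_ge0 => i _.
have h : (Z^T *m L *m Z) i i = ((delta_mx 0 i : 'M_(1, p)) *m (Z^T *m L *m Z) *m (delta_mx i 0 : 'M_(p, 1))) 0 0.
  by rewrite -rowE -colE !mxE.
rewrite h; have := hL (Z *m (delta_mx i 0 : 'M_(p, 1))).
by rewrite trmx_mul trmx_delta !mulmxA.
Qed.

Lemma tr1 (M : 'M[R]_1) : \tr M = M 0 0.
Proof. by rewrite /mxtrace big_ord1. Qed.

End C3.

Theorem theorem1 (R : rcfType) (n l N k : nat)
  (A : 'M[R]_n) (Bu : 'M[R]_(n, l))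
  (xh : 'I_N -> 'cV[R]_n) (u : 'I_N -> 'cV[R]_l) (etah : 'I_N -> 'cV[R]_n)
  (Dt : 'M[R]_(k, n + l + n))
  (hD : dataD xh u etah = Dt^T *m Dt)
  (P S W : 'M[R]_n) (Rm : 'M[R]_(n, l))
  (hopt : sdp_optimal A Dt P S Rm W) :
  let Seta : 'M[R]_n := 1%:M in
  let Theta := invmx P *m S in
  let Bl := invmx P *m Rm in
  [/\ hurwitz (A + Seta *m Theta),
      negdef ((A + Theta)^T *m P + P *m (A + Theta))
    & costJ Theta Bl xh u etah <= \tr W].
Proof.
move=> Seta Theta Bl.
case: hopt => [[hPs hWs hneg hpsd hP] _].
have hPu := @pd_unit _ _ _ hP.
set Pi := invmx P.
have hPi : Pi *m P = 1%:M by apply: mulVmx.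
have hPPi : P *m Pi = 1%:M by apply: mulmxV.
have hT : Pi^T = Pi by rewrite /Pi trmx_inv hPs.
have e2 : (A + Theta)^T *m P + P *m (A + Theta) = A^T *m P + P *m A + S^T + S.
  rewrite /Theta -/Pi linearD /= trmx_mul hT mulmxDl mulmxDr -mulmxA hPi mulmx1.
  by rewrite mulmxA hPPi mul1mx addrACA !addrA.
have h2 : negdef ((A + Theta)^T *m P + P *m (A + Theta)) by rewrite e2.
split => //.
  by rewrite /Seta mul1mx; apply: (@lyap_hurwitz _ _ _ _ hP).
set T := Ttilde P S Rm.
set X := T *m Dt^T.
have hL : lmi_block Dt P S Rm W = block_mx (block_mx (P *+ 2) X X^T 1%:M)
    (col_mx (1%:M : 'M[R]_n) (0 : 'M[R]_(k, n)))
    (row_mx (1%:M : 'M[R]_n) (0 : 'M[R]_(n, k))) W.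
  by rewrite /lmi_block -/T /X trmx_mul trmxK.
have htr := @psd_tr _ _ _ _ (col_mx (col_mx (- Pi) (X^T *m Pi)) (1%:M : 'M_n)) hpsd.
rewrite hL (@claimZ R n k 0 P Pi W X hPi hT) linearB /= subr_ge0 in htr.
have hJ : costJ Theta Bl xh u etah = \tr (Pi *m X *m X^T *m Pi).
  rewrite /X trmx_mul trmxK.
  have -> : Pi *m (T *m Dt^T) *m (Dt *m T^T) *m Pi =
      Pi *m T *m (Dt^T *m Dt) *m T^T *m Pi by rewrite !mulmxA.
  rewrite -hD /dataD mulmx_sumr mulmx_suml mulmx_suml raddf_sum /=.
  rewrite /costJ; apply: eq_bigr => i _.
  set d := datavec (xh i) (u i) (etah i).
  have he : Theta *m xh i + Bl *m u i - etah i = Pi *m T *m d.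
    rewrite /T /Ttilde /d /datavec -mulmxA !mul_row_col !mulmxDr mulNmx mulmxN.
    by rewrite !mulmxA hPi mul1mx /Theta /Bl -/Pi.
  rewrite /= he -tr1 mxtrace_mulC !trmx_mul hT.
  by rewrite !mulmxA.
by rewrite hJ.
Qed.
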